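(* Let $W$ be the Weyl group of a simply laced spherical Coxeter diagram, let $r$ be a reflection in $W$ with positive root $\delta_r$, and let $\beta,\gamma$ be two mutually orthogonal positive roots both moved by $r$, i.e. $(\beta,\delta_r)\neq0$ and $(\gamma,\delta_r)\ne0$. Then there exists a reflection $s\in W$ commuting with $r$ such that $\{\beta\}=rs\{\gamma\}$.
   Context: Roots are normalized to have $(\alpha,\alpha)=2$. For a set $B$ of mutually orthogonal positive roots and $w\in W$, $wB=\Phi^+\cap\{\pm w\beta:\beta\in B\}$, where $\Phi^+$ is the set of positive roots. *)

(* Defs.v *)
From HB Require Import structures.
From mathcomp Require Import all_boot all_order all_algebra.
From mathcomp Require Import reals.
Set Implicit Arguments. Unset Strict Implicit. Unset Printing Implicit Defensive.
Import Order.TTheory GRing.Theory Num.Theory.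
Local Open Scope ring_scope.

Section RootSystems.
Variables (R : realType) (n : nat).
Notation V := 'rV[R]_n.

Definition dot (x y : V) : R := \sum_(i < n) x 0 i * y 0 i.

(** reflection s_a(x) = x - (x,a) a  (valid since (a,a) = 2) *)
Definition refl (a x : V) : V := x - dot x a *: a.

(** A finite simply laced (crystallographic) root system, roots normalized
    to (a,a) = 2: closed under its reflections, integral inner products.
    (The Weyl group of a simply laced spherical Coxeter diagram is exactly
    the group generated by the reflections of such a root system.) *)
Definition simply_laced_root_system (Phi : seq V) : Prop :=
  [/\ forall a, a \in Phi -> dot a a = 2,
      forall a b, a \in Phi -> b \in Phi -> refl a b \in Phi
    & forall a b, a \in Phi -> b \in Phi -> exists z : int, dot a b = z%:~R].

(** positive system determined by a vector v which is not orthogonal to any root *)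
Definition regular (Phi : seq V) (v : V) : Prop :=
  forall a, a \in Phi -> dot v a != 0.

Definition posroots (Phi : seq V) (v : V) : seq V :=
  [seq a <- Phi | 0 < dot v a].

(** wB = Phi^+ \cap {+- w b : b in B} *)
Definition act_set (Phi : seq V) (v : V) (w : V -> V) (B : seq V) : seq V :=
  [seq x <- posroots Phi v | has (fun b => (x == w b) || (x == - w b)) B].

End RootSystems.

(* Main.v *)
Require Import Defs.
From HB Require Import structures.
From mathcomp Require Import all_boot all_order all_algebra.
From mathcomp Require Import reals ring lra zify.
Import Order.TTheory GRing.Theory Num.Theory.
Local Open Scope ring_scope.

Section H.
Variables (R : realType) (n : nat).
Implicit Types x y z a : 'rV[R]_n.

Lemma dotC x y : dot x y = dot y x.
Proof. by apply: eq_bigr => i _; rewrite mulrC. Qed.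

Lemma dotBZl x y z (k : R) : dot (x - k *: y) z = dot x z - k * dot y z.
Proof.
rewrite /dot mulr_sumr -sumrB; apply: eq_bigr => i _; rewrite !mxE; ring.
Qed.

Lemma dotNl x z : dot (- x) z = - dot x z.
Proof. by rewrite /dot -sumrN; apply: eq_bigr => i _; rewrite mxE mulNr. Qed.

Lemma dot_ge0 x : 0 <= dot x x.
Proof. by apply: sumr_ge0 => i _; rewrite -expr2 sqr_ge0. Qed.

Lemma dot_eq0 x : dot x x = 0 -> x = 0.
Proof.
move/psumr_eq0P => H; apply/rowP => i; rewrite !mxE.
have /(_ i isT) : forall i : 'I_n, true -> x 0 i * x 0 i = 0.
  by apply: H => j _; rewrite -expr2 sqr_ge0.
by move/eqP; rewrite mulf_eq0 orbb => /eqP.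
Qed.

Lemma dotBZr x y z (k : R) : dot z (x - k *: y) = dot z x - k * dot z y.
Proof. by rewrite dotC dotBZl !(dotC z). Qed.

Lemma dot_sq1 (Phi : seq 'rV[R]_n) a b : simply_laced_root_system Phi ->
  a \in Phi -> b \in Phi -> dot a b != 0 -> a != b -> a != - b ->
  dot a b * dot a b = 1.
Proof.
case=> H2 _ Hz Ha Hb Hab0 Hne Hne'.
have [z Ez] := Hz a b Ha Hb.
have Eab k : dot (a - k *: b) (a - k *: b) = 2 - 2 * k * dot a b + k * k * 2.
  rewrite dotBZl !dotBZr (dotC b a) H2 // H2 //; ring.
have h1 := dot_ge0 (a - 1 *: b); have h2 := dot_ge0 (a - (-1) *: b).
rewrite Eab Ez in h1; rewrite Eab Ez in h2.
have n2 : z != 2.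
  apply: contra Hne => /eqP ez; apply/eqP.
  have /dot_eq0 : dot (a - 1 *: b) (a - 1 *: b) = 0 by rewrite Eab Ez ez; ring.
  by move/eqP; rewrite scale1r subr_eq0 => /eqP.
have n2' : z != -2.
  apply: contra Hne' => /eqP ez; apply/eqP.
  have /dot_eq0 : dot (a - (-1) *: b) (a - (-1) *: b) = 0 by rewrite Eab Ez ez; ring.
  by move/eqP; rewrite scaleN1r opprK addr_eq0 => /eqP.
have nz : z != 0 by apply: contra Hab0 => /eqP ez; rewrite Ez ez.
have hle : z <= 2.
  rewrite -(ler_int R); lra.
have hge : -2 <= z.
  rewrite -(ler_int R); rewrite ?intrN /=; lra.
have zz : z * z = 1 by have /orP[/eqP->|/eqP->] : (z == 1) || (z == -1) by move: n2 n2' nz hle hge; lia.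
by rewrite Ez -intrM zz.
Qed.

Lemma dot_refl a x z : dot (refl a x) z = dot x z - dot x a * dot a z.
Proof. by rewrite /refl dotBZl. Qed.

Lemma dotNr x z : dot z (- x) = - dot z x.
Proof. by rewrite dotC dotNl dotC. Qed.

Lemma refl_comm e d x : dot e d = 0 -> refl d (refl e x) = refl e (refl d x).
Proof.
move=> H; rewrite {1}/refl dot_refl H mulr0 subr0.
rewrite [X in _ = X]/refl dot_refl (dotC d e) H mulr0 subr0.
by apply/rowP => i; rewrite /refl !mxE; ring.
Qed.
End H.
Arguments dotC {R n} x y.

Theorem lemma2p3 (R : realType) (n : nat) (Phi : seq 'rV[R]_n) (v : 'rV[R]_n)
  (HPhi : simply_laced_root_system Phi) (Hv : regular Phi v)
  (delta beta gamma : 'rV[R]_n)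
  (Hdelta : delta \in posroots Phi v)
  (Hbeta : beta \in posroots Phi v) (Hgamma : gamma \in posroots Phi v)
  (Horth : dot beta gamma = 0)
  (Hbd : dot beta delta != 0) (Hgd : dot gamma delta != 0) :
  exists2 eps : 'rV[R]_n, eps \in Phi &
    (forall x, refl delta (refl eps x) = refl eps (refl delta x)) /\
    act_set Phi v (fun x => refl delta (refl eps x)) [:: gamma] =i [:: beta].
Proof.
have HPhi' := HPhi; case: HPhi' => H2 Hrefl _.
move: (Hdelta) (Hbeta) (Hgamma); rewrite !mem_filter.
move=> /andP[pd Pd] /andP[pb Pb] /andP[pg Pg].
set b := dot beta delta; set c := dot gamma delta.
have bb : b * b = 1.
  apply: (@dot_sq1 _ _ Phi _ _ HPhi) => //.
    apply/eqP => E; move: Hgd; rewrite /c -E dotC Horth eqxx //.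
  apply/eqP => E; move: pb; rewrite E dotNr; lra.
have cc : c * c = 1.
  apply: (@dot_sq1 _ _ Phi _ _ HPhi) => //.
    apply/eqP => E; move: Hbd; rewrite /b -E Horth eqxx //.
  apply/eqP => E; move: pg; rewrite E dotNr; lra.
set r := refl delta gamma.
have Pr : r \in Phi by exact: Hrefl.
set eps := refl beta r.
have Peps : eps \in Phi by exact: Hrefl.
have Erb : dot r beta = - (c * b).
  by rewrite /r dot_refl (dotC gamma beta) Horth (dotC delta beta); rewrite -/b -/c; ring.
have Erd : dot r delta = - c.
  by rewrite /r dot_refl H2 // -/c; ring.
have Hed : dot eps delta = 0.
  rewrite /eps dot_refl Erb Erd -/b.
  have -> : - c - - (c * b) * b = c * (b * b - 1) by ring.
  by rewrite bb subrr mulr0.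
have E1 : dot gamma eps = 1.
  rewrite dotC /eps dot_refl Erb /r dot_refl H2 // (dotC delta gamma) -/c Horth.
  by rewrite mulr0 subr0 -cc; ring.
have E2 : dot (refl eps gamma) delta = c by rewrite dot_refl E1 Hed mulr0 subr0.
have Hw : refl delta (refl eps gamma) = (- (c * b)) *: beta.
  rewrite {1}/refl E2 {1}/refl E1 /eps /refl Erb /r /refl -/c.
  by apply/rowP => i; rewrite !mxE; ring.
exists eps => //; split.
  by move=> x; apply: refl_comm.
move=> x; rewrite mem_filter /= orbF Hw inE.
have : (- (c * b)) ^+ 2 == 1 by rewrite sqrrN expr2 mulrACA cc bb mulr1.
have Nb : - beta \notin posroots Phi v.
  by rewrite mem_filter dotNr negb_and -leNgt; apply/orP; left; lra.
have key : ((x == beta) || (x == - beta)) && (x \in posroots Phi v) = (x == beta).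
  case: (eqVneq x (-beta)) => [->|nb2].
    rewrite (negbTE Nb) andbF; apply/esym/eqP => E; by move: Nb; rewrite E Hbeta.
  rewrite orbF; case: (eqVneq x beta) => [->|] //=; by rewrite Hbeta.
rewrite sqrf_eq1 => /orP[] /eqP ->; rewrite ?scaleN1r ?scale1r ?opprK //.
by rewrite orbC.
Qed.
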